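(* Let $G$ be a finite group, let $k \leq m(G)$, and let $s=(g_1,\dots,g_k)$ be an irredundant generating sequence for $G$. Suppose that for every corresponding collection $(M_1,\dots,M_k)$ of maximal subgroups in general position there exists $r \in \{1,\dots,k\}$ such that: (1) $M_r = \langle g_i : i \neq r\rangle$; (2) $m(M_r) = k-1$; (3) $M_r$ satisfies the replacement property. Then $s$ satisfies the replacement property.
   Context: For a finite group $G$, a finite sequence $s=(g_1,\dots,g_k)$ of elements of $G$ is an irredundant generating sequence if $\langle g_1,\dots,g_k\rangle = G$ and $g_i \notin \langle g_j : j \neq i\rangle$ for every $i$. $m(G)$ denotes the maximal length of an irredundant generating sequence of $G$. An irredundant generating sequence $s=(g_1,\dots,g_k)$ satisfies the replacement property if for every nontrivial $g \in G$ there is an index $i$ such that $(g_1,\dots,g_{i-1},g,g_{i+1},\dots,g_k)$ generates $G$ (not necessarily irredundantly); a group $H$ satisfies the replacement property if every irredundant generating sequence of $H$ of length $m(H)$ does. A collection of subgroups $\{H_i\}_{i \in I}$ is in general position if for every $j \in I$, $\bigcap_{i\in I} H_i$ is properly contained in $\bigcap_{i \in I\setminus\{j\}} H_i$. A corresponding collection of maximal subgroups for $s$ is a sequence $(M_1,\dots,M_k)$ of maximal subgroups of $G$ with $M_i \supseteq \langle g_j : j \neq i\rangle$ for each $i$. *)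

(* Defs.v *)
From HB Require Import structures.
From mathcomp Require Import all_boot all_fingroup gseries.
Set Implicit Arguments. Unset Strict Implicit. Unset Printing Implicit Defensive.
Local Open Scope group_scope.

Section IrrGen.
Variable gT : finGroupType.

Definition others (s : seq gT) (i : nat) : {set gT} :=
  [set nth 1 s j | j : 'I_(size s) & val j != i].

Definition irr_gen (G : {set gT}) (s : seq gT) : bool :=
  (<<[set x in s]>> == G) &&
  [forall i : 'I_(size s), nth 1 s i \notin <<others s i>>].

(* m(G): maximal length of an irredundant generating sequence of G.
   (Such sequences consist of distinct nontrivial elements of G, so their
   length is < #|G|.+1; the bound is harmless.) *)
Definition mlen (G : {set gT}) : nat :=
  \max_(n < #|G|.+1 | [exists t : (nat_of_ord n).-tuple gT, irr_gen G t]) n.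

Definition repl_seq (G : {set gT}) (s : seq gT) : Prop :=
  forall g, g \in G -> g != 1 ->
    exists i : 'I_(size s), <<[set x in set_nth 1 s i g]>> = G.

Definition repl_group (H : {set gT}) : Prop :=
  forall s : seq gT, irr_gen H s -> size s = mlen H -> repl_seq H s.

Definition gen_pos (G : {set gT}) (k : nat) (M : 'I_k -> {set gT}) : Prop :=
  forall j : 'I_k,
    (G :&: \bigcap_(i < k) M i) \proper (G :&: \bigcap_(i < k | i != j) M i).

End IrrGen.

(* Main.v *)
Require Import Defs.
From HB Require Import structures.
From mathcomp Require Import all_boot all_fingroup gseries.
From mathcomp Require Import zify.
Local Open Scope group_scope.

Section Helpers.
Variable gT : finGroupType.

Lemma sub_seq (u : seq gT) (B : {set gT}) :
  (forall l, l < size u -> nth 1 u l \in B) -> [set x in u] \subset B.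
Proof. move=> H; apply/subsetP=> x; rewrite inE => /(nthP 1) [l Hl <-]; exact: H. Qed.

Lemma others_sub (u : seq gT) (i : nat) (B : {set gT}) :
  (forall l, l < size u -> l != i -> nth 1 u l \in B) -> others u i \subset B.
Proof.
move=> H; apply/subsetP=> x /imsetP [j]; rewrite inE => Hj ->; exact: H.
Qed.

Lemma mem_others (u : seq gT) (i l : nat) :
  l < size u -> l != i -> nth 1 u l \in others u i.
Proof. move=> Hl Hli; apply/imsetP; exists (Ordinal Hl) => //; by rewrite inE. Qed.

Lemma mem_set_nth_idx (u : seq gT) i y l : i < size u -> l < size u ->
  (if l == i then y else nth 1 u l) \in [set x in set_nth 1 u i y].
Proof.
move=> Hi Hl; rewrite inE.
have := @mem_nth _ 1 (set_nth 1 u i y) l.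
rewrite nth_set_nth /=; apply.
by rewrite size_set_nth (maxn_idPr Hi).
Qed.
End Helpers.
Arguments sub_seq {gT}.
Arguments others_sub {gT}.
Arguments mem_others {gT}.
Arguments mem_set_nth_idx {gT} [u i] y [l].

Theorem proposition3p2 (gT : finGroupType) (G : {group gT}) (k : nat)
    (s : k.-tuple gT) :
  k <= mlen G ->
  irr_gen G s ->
  (forall M : 'I_k -> {group gT},
     (forall i : 'I_k, maximal (M i) G) ->
     (forall i : 'I_k, <<others s i>> \subset M i) ->
     gen_pos G (fun i => (M i : {set gT})) ->
     exists r : 'I_k,
       [/\ (M r : {set gT}) = <<others s r>>,
           mlen (M r) = k.-1 &
           repl_group (M r)]) ->
  repl_seq G s.
Proof.
move=> _ /andP [/eqP HG /forallP Hirr0] Hyp g gG g1.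
have sz : size s = k := size_tuple s.
have Hirr : forall l, l < k -> nth 1 s l \notin <<others s l>>.
  move=> l Hl; have Hl' : l < size s by rewrite sz.
  exact: (Hirr0 (Ordinal Hl')).
have sG : forall l, l < k -> nth 1 s l \in G.
  by move=> l Hl; rewrite -HG; apply: mem_gen; rewrite inE mem_nth // sz.
have setG : forall i, i < k -> <<[set x in set_nth 1 s i g]>> \subset G.
  move=> i Hi; rewrite gen_subG; apply: sub_seq => l.
  rewrite size_set_nth sz (maxn_idPr Hi) nth_set_nth /=.
  by case: eqP => _ // Hl; apply: sG.
case: (boolP [exists i : 'I_(size s), <<[set x in set_nth 1 s i g]>> == G])
  => [/existsP [i /eqP Hi] | Hno0]; first by exists i.
exfalso.
have Hno : forall i, i < k -> <<[set x in set_nth 1 s i g]>> != G.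
  move=> i Hi; apply: contra Hno0 => Hi'; apply/existsP.
  have Hi2 : i < size s by rewrite sz.
  by exists (Ordinal Hi2).
have HM : forall i : 'I_k, exists M : {group gT},
    maximal M G && (<<[set x in set_nth 1 s i g]>> \subset M).
  move=> i.
  case: (maximal_exists (setG i (ltn_ord i))) => [Heq | [M maxM sM]].
    by move: (Hno i (ltn_ord i)); rewrite Heq eqxx.
  by exists M; rewrite maxM sM.
have [M HMP] := fin_all_exists HM.
have maxM : forall i : 'I_k, maximal (M i) G by move=> i; case/andP: (HMP i).
have sM : forall i : 'I_k, <<[set x in set_nth 1 s i g]>> \subset M i
  by move=> i; case/andP: (HMP i).
have gM : forall i : 'I_k, g \in M i.
  move=> i; apply: (subsetP (sM i)); apply: mem_gen.
  have := mem_set_nth_idx g (_ : i < size s) (_ : i < size s).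
  by rewrite eqxx sz; apply.
have oM : forall i : 'I_k, <<others s i>> \subset M i.
  move=> i; rewrite gen_subG; apply: others_sub => l Hl Hli.
  apply: (subsetP (sM i)); apply: mem_gen.
  have := mem_set_nth_idx g (_ : i < size s) Hl.
  by rewrite (negbTE Hli) sz; apply.
have notin : forall i : 'I_k, nth 1 s i \notin M i.
  move=> i; apply/negP => Hin.
  have := maxgroupp (maxM i); rewrite properE => /andP [_ /negP]; apply.
  rewrite -HG gen_subG; apply: sub_seq => l Hl.
  case: (eqVneq l i) => [->|ne]; first exact: Hin.
  by apply: (subsetP (oM i)); apply: mem_gen; apply: mem_others.
have gp : gen_pos G (fun i => (M i : {set gT})).
  move=> j; rewrite properE; apply/andP; split.
    apply: setIS; apply/subsetP => x /bigcapP H; apply/bigcapP => i _; exact: H.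
  apply/negP => sub.
  have : nth 1 s j \in G :&: \bigcap_(i < k | i != j) M i.
    rewrite inE sG //=; apply/bigcapP => i Hij.
    apply: (subsetP (oM i)); apply: mem_gen; apply: mem_others; first by rewrite sz.
    by rewrite eq_sym.
  move/(subsetP sub)/setIP => [_ /bigcapP H].
  by move: (notin j); rewrite H.
have [r [Mr mr rr]] := Hyp M maxM oM gp.
set t := [seq nth 1 s (bump r j) | j <- iota 0 k.-1].
have st : size t = k.-1 by rewrite size_map size_iota.
have nt : forall j, j < k.-1 -> nth 1 t j = nth 1 s (bump r j).
  by move=> j Hj; rewrite (nth_map 0) ?size_iota // nth_iota.
have rk := ltn_ord r.
have bumpk : forall j, j < k.-1 -> bump r j < k.
  by move=> j; rewrite /bump; case: (r <= j) => /=; lia.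
have bneq : forall j, bump r j != r by move=> j; rewrite eq_sym neq_bump.
have binj : forall a b, (bump r a == bump r b) = (a == b)
  by move=> a b; rewrite (inj_eq (can_inj (bumpK r))).
have tset : [set x in t] = others s r.
  apply/eqP; rewrite eqEsubset; apply/andP; split.
    apply: sub_seq => l Hl; rewrite nt -?st //; apply: mem_others.
      by rewrite sz; apply: bumpk; rewrite -st.
    exact: bneq.
  apply: others_sub => l Hl Hlr; rewrite sz in Hl.
  have e : bump r (unbump r l) = l by rewrite unbumpK // inE.
  have ul : unbump r l < k.-1.
    move: Hlr; rewrite /unbump; case: (ltnP r l) => /= H1 H2; first lia.
    have : l != r := H2; move/eqP; lia.
  by rewrite -e -nt // inE mem_nth // st.
have irr : irr_gen (M r) t.
  rewrite /irr_gen tset -Mr eqxx /=; apply/forallP => j.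
  have jl : j < k.-1 by rewrite -st.
  rewrite nt //; apply: contra (Hirr _ (bumpk _ jl)) => H.
  apply: (subsetP (genS _)) H.
  apply: others_sub => l Hl Hlj; rewrite nt -?st //; apply: mem_others.
    by rewrite sz; apply: bumpk; rewrite -st.
  by rewrite binj.
have ms : size t = mlen (M r) by rewrite mr st.
have [j Hj] := rr t irr ms g (gM r) g1.
have jl : j < k.-1 by rewrite -st.
apply: (negP (Hno (bump r j) (bumpk _ jl))).
rewrite eqEsubset setG ?bumpk //=.
have bjs : bump r j < size s by rewrite sz bumpk.
have sS : forall l, l < k -> l != bump r j ->
    nth 1 s l \in [set x in set_nth 1 s (bump r j) g].
  move=> l Hl ne; have := mem_set_nth_idx g bjs (_ : l < size s).
  by rewrite (negbTE ne) sz; apply.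
rewrite -{1}HG gen_subG; apply: sub_seq => l Hl; rewrite sz in Hl.
case: (eqVneq l (bump r j)) => [->|ne]; last by apply: mem_gen; apply: sS.
have : nth 1 s (bump r j) \in M r.
  by apply: (subsetP (oM r)); apply: mem_gen; apply: mem_others.
rewrite -Hj; apply: (subsetP (genS _)); apply: sub_seq => l'.
rewrite size_set_nth (maxn_idPr (ltn_ord j)) nth_set_nth /=.
case: eqP => [_ _ | ne' Hl']; last have {}Hl' : l' < k.-1 by rewrite -st.
  by have := mem_set_nth_idx g bjs bjs; rewrite eqxx.
rewrite nt //; apply: sS; first exact: bumpk.
by rewrite binj; apply/eqP.
Qed.
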